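(* Let $A,B\in M_n(\mathbb{R}_+)$ be nilpotent and let $C=[A,B]_\oplus=AB\oplus BA$. If the digraph $G_{A\oplus B}$ contains a directed cycle, then there exist indices $u,w$ such that $C_{uw}>0$.
   Context: Max algebra: $\mathbb{R}_+$ the nonnegative reals with $a\oplus b=\max\{a,b\}$ and ordinary multiplication; for $A,B\in M_n(\mathbb{R}_+)$, $(AB)_{ij}=\max_k a_{ik}b_{kj}$ and $(A\oplus B)_{ij}=\max\{a_{ij},b_{ij}\}$. A matrix $A$ is nilpotent if $A^k=0$ for some $k\in\mathbb{N}$ (powers in the max-product). The digraph $G_M$ of $M=(m_{ij})$ has vertices $\{1,\dots,n\}$ and an edge $i\to j$ iff $m_{ij}>0$. *)

(* Defs.v *)
From HB Require Import structures.
From mathcomp Require Import all_boot all_order all_algebra.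
Set Implicit Arguments. Unset Strict Implicit. Unset Printing Implicit Defensive.
Import Order.TTheory GRing.Theory Num.Theory.
Local Open Scope ring_scope.

Section MaxAlg.
Variable R : realFieldType.
Variable n : nat.

Definition nonneg_mx (A : 'M[R]_n) : Prop := forall i j, 0 <= A i j.

(* max-product: (AB)_{ij} = max_k a_ik b_kj  (max over nonnegative values, 0 as neutral) *)
Definition maxmul (A B : 'M[R]_n) : 'M[R]_n :=
  \matrix_(i, j) \big[Num.max/0]_(k < n) (A i k * B k j).

Definition maxadd (A B : 'M[R]_n) : 'M[R]_n :=
  \matrix_(i, j) Num.max (A i j) (B i j).

Fixpoint maxpow (A : 'M[R]_n) (k : nat) : 'M[R]_n :=
  match k with
  | 0 => 1%:M
  | k'.+1 => maxmul (maxpow A k') A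
  end.

Definition max_nilpotent (A : 'M[R]_n) : Prop := exists k : nat, maxpow A k = 0.

Definition maxcomm (A B : 'M[R]_n) : 'M[R]_n := maxadd (maxmul A B) (maxmul B A).

Definition digraph_edge (M : 'M[R]_n) : rel 'I_n := fun i j => 0 < M i j.

Definition has_dicycle (M : 'M[R]_n) : Prop :=
  exists (i : 'I_n) (s : seq 'I_n),
    s != [::] /\ path (digraph_edge M) i s /\ last i s = i.

End MaxAlg.

(* Main.v *)
Require Import Defs.
From mathcomp Require Import all_boot all_order all_algebra.
Import Order.TTheory GRing.Theory Num.Theory.
Local Open Scope ring_scope.

Lemma maxmul_ge {R : realFieldType} {n : nat} (A B : 'M[R]_n) i k j :
  A i k * B k j <= maxmul A B i j.
Proof. rewrite /maxmul mxE; exact: (le_bigmax _ (fun k => A i k * B k j)). Qed.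

Lemma not_nil_of_closed (R : realFieldType) (n : nat) (M : 'M[R]_n)
  (P : pred 'I_n) i0 :
  P i0 -> (forall x, P x -> exists y, P y /\ 0 < M x y) -> ~ max_nilpotent M.
Proof.
move=> Pi0 cl [k Hk].
have H : forall k, exists y, P y /\ 0 < maxpow M k i0 y.
  elim=> [|m [y [Py Hy]]].
    by exists i0; split => //; rewrite mxE eqxx /=; exact: ltr01.
  have [z [Pz Hz]] := cl y Py.
  exists z; split => //.
  change (0 < maxmul (maxpow M m) M i0 z). have h := maxmul_ge (maxpow M m) M i0 y z. exact: lt_le_trans (mulr_gt0 Hy Hz) h.
have [y [_ Hy]] := H k.
by rewrite Hk mxE ltxx in Hy.
Qed.

Theorem lemma3p8 (R : realFieldType) (n : nat) (A B : 'M[R]_n) :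
  nonneg_mx A -> nonneg_mx B ->
  max_nilpotent A -> max_nilpotent B ->
  has_dicycle (maxadd A B) ->
  exists u w : 'I_n, 0 < maxcomm A B u w.
Proof.
move=> _ _ nA nB [i [s [sn [Hp Hl]]]].
case: (boolP [exists u, exists w, 0 < maxcomm A B u w]).
  by case/existsP => u /existsP [w h]; exists u, w.
move=> H; exfalso.
have C0 : forall u w, maxcomm A B u w <= 0.
  move=> u w; rewrite leNgt; apply/negP => h; move/negP: H; apply.
  by apply/existsP; exists u; apply/existsP; exists w.
have AB : forall u k w, 0 < A u k -> 0 < B k w -> False.
  move=> u k w h1 h2; have := C0 u w; rewrite /maxcomm mxE ge_max => /andP[h _].
  have := le_trans (maxmul_ge A B u k w) h; rewrite leNgt mulr_gt0 //.
have BA : forall u k w, 0 < B u k -> 0 < A k w -> False.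
  move=> u k w h1 h2; have := C0 u w; rewrite /maxcomm mxE ge_max => /andP[_ h].
  have := le_trans (maxmul_ge B A u k w) h; rewrite leNgt mulr_gt0 //.
case/lastP: s sn Hp Hl => [//|s' x] _ Hp; rewrite last_rcons => Hx; subst x.
have cyc : cycle (digraph_edge (maxadd A B)) (i :: s') by [].
set c := i :: s'.
have ed : forall x, x \in c -> 0 < A x (next c x) \/ 0 < B x (next c x).
  move=> x xc; have := next_cycle cyc xc; rewrite /digraph_edge mxE.
  rewrite lt_max => /orP[]; auto.
case: (boolP [exists x, (x \in c) && (0 < A x (next c x))]).
  case/existsP => x0 Px0.
  apply: (@not_nil_of_closed _ _ A (fun x => (x \in c) && (0 < A x (next c x))) x0 Px0 _ nA).
  move=> x /andP[xc hx]; exists (next c x); split => //.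
  have nc : next c x \in c by rewrite mem_next.
  rewrite nc /=; case: (ed _ nc) => // hb; case: (AB _ _ _ hx hb).
rewrite negb_exists => /forallP allA.
apply: (@not_nil_of_closed _ _ B (fun x => x \in c) i _ _ nB).
  by rewrite inE eqxx.
move=> x xc; exists (next c x); split; first by rewrite mem_next.
case: (ed _ xc) => // ha; have := allA x; by rewrite xc ha.
Qed.
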